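(* Let $P_F$ denote the joint distribution, in a population of healthcare-seeking individuals, of the random variables $(A, Y, W, D, S, \Delta, X)$, where $A\in\{0,1\}$ is a binary exposure (vaccination status or dichotomized immune marker level at the time of potential SARS-CoV-2 exposure), $Y\in\{0,1\}$ indicates SARS-CoV-2 infection, $W\in\{0,1\}$ indicates a cause other than SARS-CoV-2 that could induce symptoms, $D\in\{0,1\}$ indicates meeting the symptom definition, $S\in\{0,1\}$ indicates obtaining SARS-CoV-2 testing, $\Delta\in\{0,1\}$ indicates that the exposure is observed, and $X\in\mathbb{R}^r$ are covariates. For $a\in\{0,1\}$ let $Y(a), D(a)$ be the potential outcomes of infection and of meeting the symptom definition under exposure $a$, and let $P_{F,ca}$ be the joint distribution of $(A,Y,W,D,X,Y(0),Y(1),D(0),D(1))$ (whose marginal on the observed full-data variables agrees with $P_F$). Let $P$ denote the distribution of the data as recorded in the test-negative design (TND) study, and define $$\mu_P(y,x) := P(A=1\mid D=1,S=1,\Delta=1,Y=y,X=x),\qquad OR(P)(x):=\frac{\mu_P(1,x)/(1-\mu_P(1,x))}{\mu_P(0,x)/(1-\mu_P(0,x))}.$$ Assume: (1) $P\big(P(Y=1,D=1\mid S=1,X)>0\big)=1$ and $P\big(P(Y=0,D=1\mid S=1,X)>0\big)=1$; (2) $P\big(P(\Delta=1\mid D=1,S=1,Y,X)>0\big)=1$; (3) $P_F\big(P_F(S=1\mid D=1,Y,X)>0\big)=1$; (4) $S\perp\!\!\!\perp A\mid D=1,Y,X$; (5) $\Delta\perp\!\!\!\perp A\mid D=1,S=1,Y,X$;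 (6) $P_F(Y=0,D=1\mid A=1,X)=P_F(Y=0,D=1\mid A=0,X)$; (7) the exposure status recorded at SARS-CoV-2 testing accurately reflects the exposure status $A$ at the time of potential SARS-CoV-2 exposure in TND participants; (8) the SARS-CoV-2 test result accurately measures the infection status $Y$ in TND participants; (9) (consistency) the conditional distribution of $(Y(a),D(a))$ given $A=a$ equals that of $(Y,D)$ given $A=a$, for $a\in\{0,1\}$; (10) (no interference) $(Y_i(a),D_i(a))\perp\!\!\!\perp A_k$ for $a\in\{0,1\}$ and all pairs of distinct individuals $i\neq k$; (11) (no unmeasured confounding) $(Y(a),D(a))\perp\!\!\!\perp A\mid X$ for $a\in\{0,1\}$. Then $$OR(P)(x)=RR(P_{F,ca})(x):=\frac{P_{F,ca}(Y(1)=1,D(1)=1\mid X=x)}{P_{F,ca}(Y(0)=1,D(0)=1\mid X=x)}.$$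
   Context: Test-negative design: individuals are enrolled if they meet the symptom definition ($D=1$) and obtain SARS-CoV-2 testing ($S=1$); cases test positive ($Y=1$) and noncases test negative ($Y=0$). The exposure $A$ is observed only for participants with $\Delta=1$. $P_F$ is the full-data distribution over the healthcare-seeking population, $P_{F,ca}$ its extension including potential outcomes, and $P$ the distribution of the observed TND data.
   Formalization: Consistency (9) is conditional on X: given A=a and X=x, (Y(a),D(a)) has the same law as (Y,D), for almost every x; also $P_F(A=a|X=x)>0$ for both a and almost every x. The statement above fails without it. *)

(* Defs.v *)
From HB Require Import structures.
From mathcomp Require Import all_boot all_order all_algebra.
From mathcomp Require Import all_classical all_reals all_analysis.
Set Implicit Arguments. Unset Strict Implicit. Unset Printing Implicit Defensive.
Import Order.TTheory GRing.Theory Num.Theory.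
Local Open Scope ring_scope.

(* One individual of the healthcare-seeking population is described by
   the covariate X in R^r (represented as r.-tuple R, with the product Borel
   sigma-algebra) together with twelve binary variables, collected in an
   outcome [w : outcome] :
     A, Y, W, D, S, Delta                 (full data, law P_F),
     Arec, Yrec                           (exposure / infection as recorded in
                                           the TND data, law P),
     Y(0), Y(1), D(0), D(1)               (potential outcomes, law P_{F,ca}).
   The joint law of all these variables is given by its disintegration along X:
   the law [mu] of X and, for every x, the conditional probability mass
   function [q x] of the binary variables given X = x.  All probabilities
   "given X = x" below are probabilities under [q x]. *)

Definition outcome := {ffun 'I_12 -> bool}.

Definition vA     : 'I_12 := @Ordinal 12 0 isT.
Definition vY     : 'I_12 := @Ordinal 12 1 isT.
Definition vW     : 'I_12 := @Ordinal 12 2 isT.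
Definition vD     : 'I_12 := @Ordinal 12 3 isT.
Definition vS     : 'I_12 := @Ordinal 12 4 isT.
Definition vDelta : 'I_12 := @Ordinal 12 5 isT.
Definition vArec  : 'I_12 := @Ordinal 12 6 isT.
Definition vYrec  : 'I_12 := @Ordinal 12 7 isT.
Definition vY0    : 'I_12 := @Ordinal 12 8 isT.
Definition vY1    : 'I_12 := @Ordinal 12 9 isT.
Definition vD0    : 'I_12 := @Ordinal 12 10 isT.
Definition vD1    : 'I_12 := @Ordinal 12 11 isT.

Definition vYpot (a : bool) : 'I_12 := if a then vY1 else vY0.
Definition vDpot (a : bool) : 'I_12 := if a then vD1 else vD0.

Section Prob.
Variable R : realType.

Definition is_pmf (q : {ffun outcome -> R}) : Prop :=
  (forall w, 0 <= q w) /\ \sum_(w : outcome) q w = 1.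

Definition prob (q : {ffun outcome -> R}) (E : pred outcome) : R :=
  \sum_(w : outcome | E w) q w.

(* elementary conditional probability P(E | F) (= 0 when P(F) = 0) *)
Definition cprob (q : {ffun outcome -> R}) (E F : pred outcome) : R :=
  prob q [pred w : outcome | E w && F w] / prob q F.

Definition cond_indep (T1 T2 : eqType) (q : {ffun outcome -> R})
    (U : outcome -> T1) (V : outcome -> T2) (C : pred outcome) : Prop :=
  forall (u : T1) (v : T2),
    prob q [pred w : outcome | (U w == u) && (V w == v) && C w] * prob q C =
    prob q [pred w : outcome | (U w == u) && C w] * prob q [pred w : outcome | (V w == v) && C w].

(* mu_P(y, x) = P(A = 1 | D = 1, S = 1, Delta = 1, Y = y, X = x), computed in the
   TND data as recorded (recorded exposure and recorded test result) *)
Definition muP (q : {ffun outcome -> R}) (y : bool) : R :=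
  cprob q [pred w : outcome | w vArec]
    [pred w : outcome | [&& w vD, w vS, w vDelta & w vYrec == y]].

Definition ORP (q : {ffun outcome -> R}) : R :=
  (muP q true / (1 - muP q true)) / (muP q false / (1 - muP q false)).

Definition RRca (q : {ffun outcome -> R}) : R :=
  prob q [pred w : outcome | w (vYpot true) && w (vDpot true)] /
  prob q [pred w : outcome | w (vYpot false) && w (vDpot false)].

End Prob.

(* Main.v *)
Require Import Defs.
From HB Require Import structures.
From mathcomp Require Import all_boot all_order all_algebra.
From mathcomp Require Import all_classical all_reals all_analysis.
From mathcomp Require Import ring lra.
Import Order.TTheory GRing.Theory Num.Theory.
Local Open Scope ring_scope.

Ltac bcase := repeat match goal with |- context [@fun_of_fin _ _ _ ?f ?i] => case: (@fun_of_fin _ _ _ f i) end.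

Ltac pw := let w := fresh "w" in move=> w /=; bcase; rewrite ?eqxx //=;
  repeat match goal with x : bool |- _ => destruct x end; by [].

Section Core.
Variable R : realType.
Variable q : {ffun outcome -> R}.
Hypothesis hq : is_pmf q.

Lemma probE (E F : pred outcome) : (forall w, E w = F w) -> prob q E = prob q F.
Proof. by move=> h; apply: eq_bigl. Qed.

Lemma prob_ge0 (E : pred outcome) : 0 <= prob q E.
Proof. by apply: sumr_ge0 => w _; case: hq. Qed.

Lemma probID (E F : pred outcome) : prob q E = prob q [pred w | E w && F w] + prob q [pred w | E w && ~~ F w].
Proof. by rewrite /prob (bigID F). Qed.

Lemma prob_le (E F : pred outcome) : (forall w, E w -> F w) -> prob q E <= prob q F.
Proof.
move=> h; rewrite (probID F E) (@probE [pred w | F w && E w] E).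
  by rewrite lerDl prob_ge0.
by move=> w /=; case hE: (E w); rewrite ?andbT ?andbF // h.
Qed.

Lemma prob_null (Z E F : pred outcome) : prob q Z = 0 -> (forall w, ~~ Z w -> E w = F w) ->
  prob q E = prob q F.
Proof.
move=> hZ h; rewrite (probID E Z) (probID F Z).
have z0 (G : pred outcome) : prob q [pred w | G w && Z w] = 0.
  apply/le_anti; rewrite prob_ge0 andbT -hZ; apply: prob_le => w /=.
  by case/andP.
rewrite !z0 !add0r; apply: probE => w /=.
case hZw: (Z w) => /=; rewrite ?andbF ?andbT //; apply: h; by rewrite hZw.
Qed.

Lemma prob_null2 (Z1 Z2 E F : pred outcome) : prob q Z1 = 0 -> prob q Z2 = 0 ->
  (forall w, ~~ Z1 w -> ~~ Z2 w -> E w = F w) -> prob q E = prob q F.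
Proof.
move=> h1 h2 h; apply: (@prob_null [pred w | Z1 w || Z2 w]).
  apply/le_anti; rewrite prob_ge0 andbT.
  rewrite (probID _ Z1) (@probE _ Z1); last by move=> w /=; case: (Z1 w); case: (Z2 w).
  rewrite h1 add0r -h2; apply: prob_le => w /=; by case: (Z1 w); case: (Z2 w).
by move=> w /=; rewrite negb_or => /andP[]; apply: h.
Qed.

Lemma prob1 : prob q predT = 1.
Proof. by case: hq. Qed.

Lemma pos_num (a b : R) : 0 <= a -> 0 < a / b -> 0 < a.
Proof.
move=> ha; have [->|] := eqVneq a 0; first by rewrite mul0r ltxx.
by move=> an0 _; rewrite lt_def an0.
Qed.

Lemma ratio_indep (a a' b c d d' : R) : a * c = b * d -> a' * c = b * d' ->
  b != 0 -> c != 0 -> a / a' = d / d'.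
Proof.
move=> h h' b0 c0.
have -> : a = b * d / c by rewrite -h mulfK.
have -> : a' = b * d' / c by rewrite -h' mulfK.
have [->|d'0] := eqVneq d' 0; first by rewrite !(mulr0, mul0r, invr0).
by field; rewrite b0 c0 d'0.
Qed.



Lemma eq4 (a b c d a' b' c' d' : R) : a * b = c * d ->
  a = a' -> b = b' -> c = c' -> d = d' -> a' * b' = c' * d'.
Proof. by move=> h <- <- <- <-. Qed.
Arguments eq4 {a b c d a' b' c' d'}.

Lemma divdiv (a b c : R) : c != 0 -> (a / c) / (b / c) = a / b.
Proof. by move=> c0; rewrite invf_div mulrA divfK. Qed.

Lemma odds (y : bool)
 (h7 : prob q [pred w : outcome | [&& w vD, w vS & w vArec != w vA]] = 0)
 (h8 : prob q [pred w : outcome | [&& w vD, w vS & w vYrec != w vY]] = 0)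
 (h2 : 0 < prob q [pred w : outcome | [&& w vD, w vS & w vYrec == y]] ->
       0 < cprob q [pred w : outcome | w vDelta] [pred w : outcome | [&& w vD, w vS & w vYrec == y]])
 (h4 : cond_indep q (fun w => w vS) (fun w => w vA) [pred w : outcome | w vD && (w vY == y)])
 (h5 : cond_indep q (fun w => w vDelta) (fun w => w vA)
                     [pred w : outcome | [&& w vD, w vS & w vY == y]])
 (hpos : 0 < prob q [pred w : outcome | [&& w vD, w vS & w vYrec == y]]) :
 muP q y / (1 - muP q y) =
   prob q [pred w : outcome | w vA && (w vD && (w vY == y))] /
   prob q [pred w : outcome | ~~ w vA && (w vD && (w vY == y))].
Proof.
set CD := [pred w : outcome | [&& w vDelta, w vD, w vS & w vY == y]].
set C := [pred w : outcome | [&& w vD, w vS & w vY == y]].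
set C' := [pred w : outcome | w vD && (w vY == y)].
have hCD : 0 < prob q CD.
  have := h2 hpos; rewrite /cprob => /(pos_num _ _ (prob_ge0 _)).
  by rewrite (@prob_null _ _ CD h8) //; pw.
have hC : 0 < prob q C.
  by apply: (lt_le_trans hCD); apply: prob_le => w /=; case/and4P => _ -> -> ->.
have hC' : 0 < prob q C'.
  by apply: (lt_le_trans hC); apply: prob_le => w /=; case/and3P => -> _ ->.
have eN : muP q y = prob q [pred w : outcome | w vA && CD w] / prob q CD.
  rewrite /muP /cprob; congr (_ / _); (eapply prob_null2; [exact h7 | exact h8 | pw]).
have eS : prob q CD = prob q [pred w : outcome | w vA && CD w] + prob q [pred w : outcome | ~~ w vA && CD w].
  by rewrite (probID CD [pred w : outcome | w vA]); congr (_ + _); apply: probE; pw.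
have e1 : 1 - muP q y = prob q [pred w : outcome | ~~ w vA && CD w] / prob q CD.
  rewrite eN -{1}(divff (lt0r_neq0 hCD)) -mulrBl; congr (_ / _).
  by rewrite eS addrC addKr.
rewrite e1 eN divdiv ?lt0r_neq0 //.
rewrite (@ratio_indep _ _ (prob q CD) (prob q C) (prob q [pred w : outcome | w vA && C w])
   (prob q [pred w : outcome | ~~ w vA && C w])); last 4 first.
- by apply: (eq4 (h5 true true)); apply: probE; pw.
- by apply: (eq4 (h5 true false)); apply: probE; pw.
- by rewrite lt0r_neq0.
- by rewrite lt0r_neq0.
apply: (@ratio_indep _ _ (prob q C) (prob q C')).
- by apply: (eq4 (h4 true true)); apply: probE; pw.
- by apply: (eq4 (h4 true false)); apply: probE; pw.
- by rewrite lt0r_neq0.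
- by rewrite lt0r_neq0.
Qed.


Lemma oddsF
  (hA : forall a : bool, 0 < prob q [pred w : outcome | w vA == a])
  (h6 : cprob q [pred w : outcome | ~~ w vY && w vD] [pred w : outcome | w vA] =
        cprob q [pred w : outcome | ~~ w vY && w vD] [pred w : outcome | ~~ w vA])
  (hpos : 0 < prob q [pred w : outcome | w vD && (w vY == false)]) :
  prob q [pred w : outcome | w vA && (w vD && (w vY == false))] /
  prob q [pred w : outcome | ~~ w vA && (w vD && (w vY == false))] =
  prob q [pred w : outcome | w vA == true] / prob q [pred w : outcome | w vA == false].
Proof.
have hA1 := lt0r_neq0 (hA true); have hA0 := lt0r_neq0 (hA false).
move: h6; rewrite /cprob.
set k := (X in X = _ -> _).
have ek : prob q [pred w : outcome | w vA && (w vD && (w vY == false))] =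
   k * prob q [pred w : outcome | w vA].
  rewrite /k divfK; last by rewrite (@probE _ ([pred w : outcome | w vA == true])) //; pw.
  by apply: probE; pw.
move=> hk.
have ek' : prob q [pred w : outcome | ~~ w vA && (w vD && (w vY == false))] =
   k * prob q [pred w : outcome | ~~ w vA].
  rewrite hk divfK; last by rewrite (@probE _ ([pred w : outcome | w vA == false])) //; pw.
  by apply: probE; pw.
have k0 : k != 0.
  apply/eqP => k0; move: hpos.
  rewrite (probID _ [pred w : outcome | w vA]).
  rewrite (@probE [pred w : outcome | (w vD && (w vY == false)) && w vA]
       [pred w : outcome | w vA && (w vD && (w vY == false))]); last by pw.
  rewrite (@probE [pred w : outcome | (w vD && (w vY == false)) && ~~ w vA]
       [pred w : outcome | ~~ w vA && (w vD && (w vY == false))]); last by pw.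
  by rewrite ek ek' k0 !mul0r addr0 ltxx.
rewrite ek ek' invfM mulrACA mulfV ?mul1r //.
by congr (_ / _); apply: probE; pw.
Qed.

Lemma RRform
  (hA : forall a : bool, 0 < prob q [pred w : outcome | w vA == a])
  (h9 : forall a y d : bool,
          cprob q [pred w : outcome | (w (vYpot a) == y) && (w (vDpot a) == d)]
                      [pred w : outcome | w vA == a] =
          cprob q [pred w : outcome | (w vY == y) && (w vD == d)]
                      [pred w : outcome | w vA == a])
  (h11 : forall a : bool,
           cond_indep q (fun w => (w (vYpot a), w (vDpot a)))
                      (fun w => w vA) predT) :
  forall a : bool, prob q [pred w : outcome | w (vYpot a) && w (vDpot a)] =
    prob q [pred w : outcome | (w vA == a) && (w vD && (w vY == true))] /
    prob q [pred w : outcome | w vA == a].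
Proof.
move=> a; have hA0 := lt0r_neq0 (hA a).
have e11 := h11 a (true, true) a; rewrite prob1 mulr1 in e11.
have e9 := h9 a true true; rewrite /cprob in e9.
rewrite -[LHS](mulfK hA0).
transitivity (prob q [pred w : outcome | ((w (vYpot a), w (vDpot a)) == (true, true)) && predT w] *
   prob q [pred w : outcome | (w vA == a) && predT w] / prob q [pred w : outcome | w vA == a]).
  congr (_ * _ / _); apply: probE; pw.
rewrite -e11.
transitivity (prob q [pred w : outcome | [pred w : outcome | (w (vYpot a) == true) && (w (vDpot a) == true)] w && [pred w : outcome | w vA == a] w] / prob q [pred w : outcome | w vA == a]).
  congr (_ / _); apply: probE; pw.
rewrite e9; congr (_ / _); apply: probE; pw.
Qed.

End Core.

Lemma aeand d (T : measurableType d) (R : realType) (mu : {measure set T -> \bar R})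
  (P Q : T -> Prop) :
  {ae mu, forall x, P x} -> {ae mu, forall x, Q x} -> {ae mu, forall x, P x /\ Q x}.
Proof. by move=> hP hQ; apply: filterS2 hP hQ => x. Qed.
Arguments aeand {d T R mu P Q}.

Theorem theorem2 (R : realType) (r : nat)
  (mu : probability (r.-tuple R) R)
  (q : r.-tuple R -> {ffun outcome -> R})
  (hq_pmf : forall x, is_pmf (q x))
  (hq_meas : forall w, measurable_fun setT (fun x => q x w))
  (hApos : {ae mu, forall x, forall a : bool,
             0 < prob (q x) [pred w : outcome | w vA == a]})
  (H1 : {ae mu, forall x,
          0 < cprob (q x) [pred w : outcome | w vYrec && w vD] [pred w : outcome | w vS] /\
          0 < cprob (q x) [pred w : outcome | ~~ w vYrec && w vD] [pred w : outcome | w vS]})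
  (H2 : {ae mu, forall x, forall y : bool,
          0 < prob (q x) [pred w : outcome | [&& w vD, w vS & w vYrec == y]] ->
          0 < cprob (q x) [pred w : outcome | w vDelta]
                          [pred w : outcome | [&& w vD, w vS & w vYrec == y]]})
  (H3 : {ae mu, forall x, forall y : bool,
          0 < prob (q x) [pred w : outcome | w vD && (w vY == y)] ->
          0 < cprob (q x) [pred w : outcome | w vS] [pred w : outcome | w vD && (w vY == y)]})
  (H4 : {ae mu, forall x, forall y : bool,
          cond_indep (q x) (fun w => w vS) (fun w => w vA)
                     [pred w : outcome | w vD && (w vY == y)]})
  (H5 : {ae mu, forall x, forall y : bool,
          cond_indep (q x) (fun w => w vDelta) (fun w => w vA)
                     [pred w : outcome | [&& w vD, w vS & w vY == y]]})
  (H6 : {ae mu, forall x,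
          cprob (q x) [pred w : outcome | ~~ w vY && w vD] [pred w : outcome | w vA] =
          cprob (q x) [pred w : outcome | ~~ w vY && w vD] [pred w : outcome | ~~ w vA]})
  (H7 : {ae mu, forall x,
          prob (q x) [pred w : outcome | [&& w vD, w vS & w vArec != w vA]] = 0})
  (H8 : {ae mu, forall x,
          prob (q x) [pred w : outcome | [&& w vD, w vS & w vYrec != w vY]] = 0})
  (H9 : {ae mu, forall x, forall a y d : bool,
          cprob (q x) [pred w : outcome | (w (vYpot a) == y) && (w (vDpot a) == d)]
                      [pred w : outcome | w vA == a] =
          cprob (q x) [pred w : outcome | (w vY == y) && (w vD == d)]
                      [pred w : outcome | w vA == a]})
  (H11 : {ae mu, forall x, forall a : bool,
           cond_indep (q x) (fun w => (w (vYpot a), w (vDpot a)))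
                      (fun w => w vA) predT}) :
  {ae mu, forall x, ORP (q x) = RRca (q x)}.
Proof.
have := aeand (aeand (aeand (aeand (aeand (aeand (aeand (aeand (aeand
  hApos H1) H2) H4) H5) H6) H7) H8) H9) H11.
apply: filterS => x [[[[[[[[[hA h1] h2] h4] h5] h6] h7] h8] h9] h11].
have hq := hq_pmf x.
have pos (y : bool) : 0 < prob (q x) [pred w : outcome | [&& w vD, w vS & w vYrec == y]].
  case: h1 => h1t h1f; case: y.
    move: h1t; rewrite /cprob => /(@pos_num _ _ _ (@prob_ge0 _ _ hq _)).
    by rewrite (@probE _ _ _ [pred w : outcome | [&& w vD, w vS & w vYrec == true]]) //; pw.
  move: h1f; rewrite /cprob => /(@pos_num _ _ _ (@prob_ge0 _ _ hq _)).
  by rewrite (@probE _ _ _ [pred w : outcome | [&& w vD, w vS & w vYrec == false]]) //; pw.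
have hposF : 0 < prob (q x) [pred w : outcome | w vD && (w vY == false)].
  apply: (lt_le_trans (pos false)).
  rewrite (@prob_null _ _ hq _ _ [pred w : outcome | [&& w vD, w vS & w vY == false]] h8); last by pw.
  by apply: prob_le => // w /=; case/and3P => -> _ ->.
rewrite /ORP (@odds _ _ hq true h7 h8 (h2 true) (h4 true) (h5 true) (pos true)).
rewrite (@odds _ _ hq false h7 h8 (h2 false) (h4 false) (h5 false) (pos false)).
rewrite (@oddsF _ _ hA h6 hposF).
rewrite /RRca (@RRform _ _ hq hA h9 h11 true) (@RRform _ _ hq hA h9 h11 false).
rewrite (@probE _ _ [pred w : outcome | w vA && (w vD && (w vY == true))]
   [pred w : outcome | (w vA == true) && (w vD && (w vY == true))]); last by pw.
rewrite (@probE _ _ [pred w : outcome | ~~ w vA && (w vD && (w vY == true))]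
   [pred w : outcome | (w vA == false) && (w vD && (w vY == true))]); last by pw.
rewrite !invf_div; ring.
Qed.
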